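(* Let $\langle A_\alpha:\alpha<\mathfrak{p}\rangle$ be a tower. Let $X$ be the space on $(\omega\times\mathfrak{p})\cup\{\infty\}$ in which all points of $\omega\times\mathfrak{p}$ are isolated and a local subbase at $\infty$ consists of the sets $X\setminus(\{n\}\times\mathfrak{p})$ for $n<\omega$; $X\setminus(A_\alpha\times\alpha)$ for $\alpha<\mathfrak{p}$; and $X\setminus(B\times\alpha)$ where $\alpha<\mathfrak{p}$ has $\mathrm{cf}(\alpha)>\omega$ and $B$ is a pseudo-intersection of $\{A_\beta:\beta<\alpha\}$. Then $X$ is CFC, Fréchet, and not $L$-selective.
   Context: $\mathfrak{p}$ is the pseudo-intersection number. A pseudo-intersection of a family of subsets of $\omega$ is a set $B\subseteq\omega$ with $B\subseteq^*A$ (inclusion modulo finite) for every $A$ in the family. A tower of length $\kappa$ is a sequence $\langle A_\alpha:\alpha<\kappa\rangle$ of infinite subsets of $\omega$ with $A_\beta\subseteq^*A_\alpha$ for $\alpha<\beta$ and no infinite pseudo-intersection. A space is CFC if every countable subspace is first countable; it is Fréchet if whenever $x\in\overline{A}$ some sequence in $A$ converges to $x$. $\mathcal{F}(X)$ is the set of nonempty closed subsets of $X$; $\varphi:Y\rightarrow\mathcal{F}(X)$ is lower semicontinuous if for every open $W\subseteq X$, $\{y:\varphi(y)\cap W\neq\emptyset\}$ is open. $X$ is $L$-selective if every lower semicontinuous $\varphi:\omega+1\rightarrow\mathcal{F}(X)$ ($\omega+1$ with the order topology) has a continuous selection $s$ with $s(y)\in\varphi(y)$ for all $y$. *)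

(* Defs.v *)
From HB Require Import structures.
From mathcomp Require Import all_boot all_order.
From mathcomp Require Import all_classical all_reals topology.
Set Implicit Arguments.
Unset Strict Implicit.
Unset Printing Implicit Defensive.
Import Order.TTheory.
Local Open Scope classical_set_scope.

Definition subset_mod_fin (B A : set nat) : Prop := finite_set (B `\` A).

Definition pseudo_intersection (F : set (set nat)) (B : set nat) : Prop :=
  forall A, F A -> subset_mod_fin B A.

Definition SFIP (F : set (set nat)) : Prop :=
  forall s : seq (set nat), s != [::] -> (forall A, A \in s -> F A) ->
    infinite_set [set n | forall A, A \in s -> A n].

Definition p_family (F : set (set nat)) : Prop :=
  (forall A, F A -> infinite_set A) /\ SFIP F /\
  ~ (exists B, infinite_set B /\ pseudo_intersection F B).

(* Ordinals: a well-ordered type K "is" the cardinal p when it is an   *)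
(* initial ordinal (every proper initial segment has strictly smaller  *)
(* cardinality) whose cardinality is the pseudo-intersection number p. *)

Definition well_ordered d (K : orderType d) : Prop :=
  forall S : set K, S !=set0 -> exists m, S m /\ forall y, S y -> (m <= y)%O.

Definition initial_ordinal d (K : orderType d) : Prop :=
  forall a : K, ~ ([set: K] #<= [set b : K | (b < a)%O])%card.

Definition card_is_p d (K : orderType d) : Prop :=
  (exists F, p_family F /\ (F #<= [set: K])%card) /\
  (forall F, p_family F -> ([set: K] #<= F)%card).

Definition is_ordinal_p d (K : orderType d) : Prop :=
  well_ordered K /\ initial_ordinal K /\ card_is_p K.

(* cf(a) > omega: a is nonzero and every countable set of ordinals below a
   is bounded below a (this excludes a = 0, successors, and limits of
   countable cofinality) *)
Definition uncountable_cof d (K : orderType d) (a : K) : Prop :=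
  (exists b, (b < a)%O) /\
  forall f : nat -> K, (forall n, (f n < a)%O) ->
    exists b, (b < a)%O /\ forall n, (f n < b)%O.

Definition tower d (K : orderType d) (A : K -> set nat) : Prop :=
  (forall a, infinite_set (A a)) /\
  (forall a b, (a < b)%O -> subset_mod_fin (A b) (A a)) /\
  ~ (exists B, infinite_set B /\ pseudo_intersection (range A) B).

(* The space X on (omega x K) ∪ {oo}; oo is None, (n, a) is Some (n,a) *)

Section Xspace.
Context d (K : orderType d).

(* the underlying type; it mentions A so that the topology depends on A *)
Definition Xsp (A : K -> set nat) : Type := option (nat * K).

Variable A : K -> set nat.
HB.instance Definition _ := Choice.on (Xsp A).
HB.instance Definition _ := Pointed.on (set (Xsp A)).

Definition Xsubbase : set (set (Xsp A)) :=
  [set S | (exists p : nat * K, S = [set Some p])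
       \/ (exists n : nat, S = ~` [set Some (n, b) | b in [set: K]])
       \/ (exists a : K,
             S = ~` [set Some (m, b) | m in A a & b in [set b | (b < a)%O]])
       \/ (exists (a : K) (B : set nat),
             uncountable_cof a /\
             pseudo_intersection [set A b | b in [set b | (b < a)%O]] B /\
             S = ~` [set Some (m, b) | m in B & b in [set b | (b < a)%O]])].

HB.instance Definition _ :=
  isSubBaseTopological.Build (Xsp A) Xsubbase (@id (set (Xsp A))).

End Xspace.

(* every countable subspace is first countable: for each countable Y and
   y in Y there are countably many open neighbourhoods U_n of y in X such
   that the traces U_n ∩ Y form a local base at y of the subspace Y *)
Definition CFC (T : topologicalType) : Prop :=
  forall Y : set T, countable Y -> forall y, Y y ->
    exists U : nat -> set T, (forall n, open (U n) /\ U n y) /\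
      forall V, open V -> V y -> exists n, U n `&` Y `<=` V.

Definition Frechet (T : topologicalType) : Prop :=
  forall (Y : set T) (x : T), closure Y x ->
    exists u : nat -> T, (forall n, Y (u n)) /\ (u @ \oo --> x).

(* omega + 1 with the order topology, represented as option nat with
   None = omega: a set S is open iff whenever it contains omega it
   contains a final segment (N, omega] *)
Definition omega1_open (S : set (option nat)) : Prop :=
  S None -> exists N, forall n, (N <= n)%N -> S (Some n).

Definition lower_semicontinuous (T : topologicalType)
    (phi : option nat -> set T) : Prop :=
  forall W : set T, open W -> omega1_open [set y | phi y `&` W !=set0].

Definition omega1_continuous (T : topologicalType) (s : option nat -> T) :=
  forall W : set T, open W -> omega1_open (s @^-1` W).

Definition L_selective (T : topologicalType) : Prop :=
  forall phi : option nat -> set T,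
    (forall y, phi y !=set0 /\ closed (phi y)) ->
    lower_semicontinuous phi ->
    exists s : option nat -> T, omega1_continuous s /\ forall y, phi y (s y).

(* Main.v *)
Require Import Defs.
From HB Require Import structures.
From mathcomp Require Import all_boot all_order.
From mathcomp Require Import all_classical all_reals topology finmap.
Import Order.TTheory.
Set Implicit Arguments. Unset Strict Implicit. Unset Printing Implicit Defensive.
Local Open Scope classical_set_scope.

Lemma fin_bound {F : set nat} : finite_set F -> exists N, forall n, F n -> (n < N)%N.
Proof.
move=> /finite_fsetP [X ->].
suff [N HN] : exists N, forall n, n \in enum_fset X -> (n < N)%N by exists N.
elim: (enum_fset X) => [|a s [N HN]]; first by exists 0%N.
exists (maxn a.+1 N) => n; rewrite inE => /orP [/eqP ->|/HN nN].
  by rewrite leq_max leqnn.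
by rewrite leq_max nN orbT.
Qed.

Lemma bound_fin (F : set nat) N : (forall n, F n -> (n < N)%N) -> finite_set F.
Proof.
move=> H; apply: (@sub_finite_set _ _ `I_N); last exact: finite_II.
by move=> n /H.
Qed.

Lemma infinite_unb (E : set nat) : infinite_set E -> forall k, exists n, E n /\ (k <= n)%N.
Proof.
move=> iE k; apply: contrapT => H; apply: iE; apply: (@bound_fin _ k) => n En.
by rewrite ltnNge; apply/negP => kn; apply: H; exists n.
Qed.

Lemma ltNle_K d (K : orderType d) (x y : K) : ~ (x < y)%O -> (y <= x)%O.
Proof. by rewrite leNgt => /negP. Qed.

Section Tower.
Context d (K : orderType d) {A : K -> set nat}.
Hypothesis hT : tower A.

Lemma smf_le {a b : K} : (a <= b)%O -> subset_mod_fin (A b) (A a).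
Proof.
move=> ab; case: (eqVneq a b) => [<-|nab].
  unfold subset_mod_fin; rewrite setDv; exact: finite_set0.
case: hT => _ [H _]; apply: H; by rewrite lt_neqAle nab ab.
Qed.

Lemma K_inh : exists k : K, True.
Proof.
apply: contrapT => H; case: hT => _ [_]; apply; exists setT; split.
  exact: infinite_nat.
by move=> B [a _ _]; case: H; exists a.
Qed.

Lemma no_max (a : K) : exists b, (a < b)%O.
Proof.
apply: contrapT => H; case: hT => iA [_]; apply; exists (A a); split => //.
move=> _ [b _ <-]; apply: smf_le; apply: ltNle_K => ab; apply: H; by exists b.
Qed.

Lemma finite_bounds (P : nat -> nat -> Prop) k :
  (forall j M M', (M <= M')%N -> P j M -> P j M') ->
  (forall j, (j <= k)%N -> exists M, P j M) -> exists M, forall j, (j <= k)%N -> P j M.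
Proof.
move=> mono; elim: k => [|k IH] H.
  have [M HM] := H 0%N (leqnn 0); exists M => j; rewrite leqn0 => /eqP ->; exact: HM.
have [M1 HM1] : exists M, forall j, (j <= k)%N -> P j M.
  by apply: IH => j jk; apply: H; apply: leq_trans jk _.
have [M2 HM2] := H k.+1 (leqnn _).
exists (maxn M1 M2) => j; rewrite leq_eqVlt => /orP [/eqP ->|jk].
  by apply: mono HM2; rewrite leq_maxr.
by apply: mono (HM1 j jk); rewrite leq_maxl.
Qed.

Lemma cof (f : nat -> K) : exists delta, forall n, (f n < delta)%O.
Proof.
apply: contrapT => Hn.
have H : forall delta, exists n, (delta <= f n)%O.
  move=> delta; apply: contrapT => H1; apply: Hn; exists delta => n.
  by rewrite ltNge; apply/negP => H2; apply: H1; exists n.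
pose g := fix g k := match k with 0%N => f 0%N | k'.+1 => Order.max (g k') (f k'.+1) end.
have fg k : (f k <= g k)%O by case: k => [|k] //=; rewrite le_max lexx orbT.
have gmono k k' : (k <= k')%N -> (g k <= g k')%O.
  elim: k' => [|k' IH]; first by rewrite leqn0 => /eqP ->.
  rewrite leq_eqVlt => /orP [/eqP ->//|]; rewrite ltnS => /IH kk'.
  by apply: le_trans kk' _ => /=; rewrite le_max lexx.
have hM : forall k, exists M, forall j, (j <= k)%N -> forall n, A (g k) n -> ~ A (g j) n -> (n < M)%N.
  move=> k; apply: finite_bounds.
    by move=> j M M' MM' HP n a b; apply: leq_trans (HP n a b) MM'.
  move=> j jk; have [M HM] := fin_bound (smf_le (gmono _ _ jk)).
  by exists M => n a b; apply: HM.
have [M HM] := choice hM.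
have hpick : forall km : nat * nat, exists n, A (g km.1) n /\ (km.2 <= n)%N.
  move=> [k m]; apply: infinite_unb; by case: hT.
have [pick' Hpick'] := choice hpick.
pose pick k m := pick' (k, m).
have Hpick k m : A (g k) (pick k m) /\ (m <= pick k m)%N by exact: (Hpick' (k, m)).
pose b := fix b k := match k with 0%N => pick 0%N (M 0%N) | k'.+1 => pick k'.+1 (maxn (M k'.+1) (b k').+1) end.
have bA k : A (g k) (b k).
  by case: k => [|k] /=; [case: (Hpick 0%N (M 0%N)) | case: (Hpick k.+1 (maxn (M k.+1) (b k).+1))].
have bM k : (M k <= b k)%N.
  case: k => [|k] /=; first by case: (Hpick 0%N (M 0%N)).
  have [_ h] := Hpick k.+1 (maxn (M k.+1) (b k).+1); apply: leq_trans h; exact: leq_maxl.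
have bS k : (b k < b k.+1)%N.
  have [_ h] := Hpick k.+1 (maxn (M k.+1) (b k).+1); apply: leq_trans h; exact: leq_maxr.
have bmono k k' : (k < k')%N -> (b k < b k')%N.
  elim: k' => [//|k' IH]; rewrite ltnS leq_eqVlt => /orP [/eqP ->//|/IH h].
  exact: ltn_trans h (bS k').
case: hT => _ [_]; apply; exists (range b); split.
  move=> /fin_bound [N HN].
  have : (N <= b N)%N.
    elim: N {HN} => [//|N IH]; apply: leq_ltn_trans IH (bS N).
  by rewrite leqNgt HN //; exists N.
move=> _ [al _ <-].
have [n aln] := H al.
have [N' HN'] := fin_bound (smf_le (le_trans aln (fg n))).
apply: (@bound_fin _ (maxn N' (b n).+1)) => _ [[k _ <-] nA].
case: (ltnP k n) => kn.
  by rewrite leq_max ltnS (ltnW (bmono _ _ kn)) orbT.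
have : A (g n) (b k).
  apply: contrapT => nA'.
  have := HM k n kn (b k) (bA k) nA'; by rewrite ltnNge bM.
by move=> h; rewrite leq_max HN' //.
Qed.

End Tower.

Section XBasics.
Context d (K : orderType d) {A : K -> set nat}.
Lemma nbhsX (x : Xsp A) W : nbhs x W <->
  exists B, [/\ finI_from (@Xsubbase _ _ A) id B, B x & B `<=` W].
Proof.
split.
  move=> [B [[D' sD' <-] [i Di ix] sBW]].
  exists i; split.
  - exact: sD'.
  - exact: ix.
  - move=> y iy; apply: sBW; by exists i.
move=> [B [fB Bx BW]]; exists B; split => //.
exists [set B]; first by move=> _ ->.
by rewrite bigcup_set1.
Qed.
Lemma nbhs_ind (x : Xsp A) (P : set (Xsp A) -> Prop) :
  P setT -> (forall U V, P U -> P V -> P (U `&` V)) ->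
  (forall U V, U `<=` V -> P U -> P V) ->
  (forall S, Xsubbase S -> S x -> P S) ->
  forall W, nbhs x W -> P W.
Proof.
move=> PT PI PS Psub W /nbhsX [B [[D' sD' <-] Bx BW]].
apply: (PS _ _ BW).
have : forall i, i \in (enum_fset D') -> Xsubbase i /\ i x.
  move=> i iD; split; first exact: (set_mem (sD' i iD)).
  by apply: Bx.
have -> : \bigcap_(i in [set` D']) id i = [set y | forall i, i \in enum_fset D' -> i y] by [].
elim: (enum_fset D') => [|a s IH] H.
  by apply: PS PT => y _ i.
have -> : [set y | forall i, i \in a :: s -> i y] = a `&` [set y | forall i, i \in s -> i y].
  apply/seteqP; split => y.
    by move=> H1; split; [apply: H1; rewrite inE eqxx | move=> i iS; apply: H1; rewrite inE iS orbT].
  by move=> [ay H1] i; rewrite inE => /orP [/eqP ->|/H1].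
apply: PI.
  by have [] := H a (mem_head _ _); apply: Psub.
by apply: IH => i iS; apply: H; rewrite inE iS orbT.
Qed.
Lemma sub_nbhs (x : Xsp A) S : Xsubbase S -> S x -> nbhs x S.
Proof.
move=> sS Sx; apply/nbhsX; exists S; split => //.
exact: finI_from1.
Qed.

Lemma openX (W : set (Xsp A)) : (W None -> nbhs (None : Xsp A) W) -> open W.
Proof.
move=> H; rewrite openE => -[[n b]|] Wx; last exact: H.
have : nbhs (Some (n, b) : Xsp A) [set Some (n, b)].
  by apply: sub_nbhs => //; left; exists (n, b).
by apply: filterS => y ->.
Qed.

Lemma cvgX (u : nat -> Xsp A) x :
  (forall S, Xsubbase S -> S x -> exists N, forall n, (N <= n)%N -> S (u n)) ->
  u @ \oo --> x.
Proof.
move=> H W; apply: (@nbhs_ind x (fun W => (u @ \oo) W)).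
- exact: filterT.
- by move=> U V; apply: filterI.
- by move=> U V; apply: filterS.
- move=> S sS Sx; have [N HN] := H S sS Sx; by exists N.
Qed.

Lemma rowC_Some n m b : (~` [set (Some (n, c) : Xsp A) | c in [set: K]]) (Some (m, b)) <-> m <> n.
Proof.
split => [H mn|mn [c _ [E _]]]; last by apply: mn.
by apply: H; exists b => //; rewrite mn.
Qed.

Lemma rowC_None n : (~` [set (Some (n, c) : Xsp A) | c in [set: K]]) (None : Xsp A).
Proof. by move=> [c _]. Qed.

Lemma AC_Some (B : set nat) a m b :
  (~` [set (Some (k, c) : Xsp A) | k in B & c in [set c | (c < a)%O]]) (Some (m, b))
  <-> ~ (B m /\ (b < a)%O).
Proof.
split => [H [Bm ba]|H [k Bk [c ca [E1 E2]]]].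
  by apply: H; exists m => //; exists b.
by apply: H; subst; split.
Qed.

Lemma AC_None (B : set nat) a :
  (~` [set (Some (k, c) : Xsp A) | k in B & c in [set c | (c < a)%O]]) (None : Xsp A).
Proof. by move=> [k _ [c _]]. Qed.

Lemma nbI (x : Xsp A) (U V : set (Xsp A)) : nbhs x U -> nbhs x V -> nbhs x (U `&` V).
Proof. by move=> HU HV; apply: filterI. Qed.
Lemma nbS (x : Xsp A) (U V : set (Xsp A)) : U `<=` V -> nbhs x U -> nbhs x V.
Proof. by move=> UV HU; apply: filterS UV HU. Qed.
Lemma nbT (x : Xsp A) : nbhs x (setT : set (Xsp A)).
Proof. exact: filterT. Qed.

End XBasics.

Section NotL.
Context d (K : orderType d) {A : K -> set nat}.
Hypothesis hT : tower A.

Lemma subA (a : K) : Xsubbase (~` [set (Some (k, c) : Xsp A) | k in A a & c in [set c | (c < a)%O]]).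
Proof. by right; right; left; exists a. Qed.

Lemma subrow n : Xsubbase (~` [set (Some (n, c) : Xsp A) | c in [set: K]]).
Proof. by right; left; exists n. Qed.

Lemma subSome p : Xsubbase ([set (Some p : Xsp A)]).
Proof. by left; exists p. Qed.

Lemma nbhs_None_corner (k0 : K) W : nbhs (None : Xsp A) W ->
  exists N beta, forall n b, (N <= n)%N -> (beta <= b)%O -> W (Some (n, b)).
Proof.
apply: (@nbhs_ind _ _ _ None (fun W => exists N beta, forall n b, (N <= n)%N -> (beta <= b)%O -> W (Some (n, b)))).
- by exists 0%N, k0.
- move=> U V [N1 [b1 H1]] [N2 [b2 H2]]; exists (maxn N1 N2), (Order.max b1 b2) => n b.
  rewrite geq_max ge_max => /andP [n1 n2] /andP [c1 c2]; split; [exact: H1|exact: H2].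
- move=> U V UV [N [b H]]; exists N, b => n c nN bc; apply: UV; exact: H.
- move=> S + SN; case=> [[p E]|[[m ->]|[[a ->]|[a [B [_ [_ ->]]]]]]]; first by rewrite E in SN.
  + exists m.+1, k0 => n b nm _; apply/(rowC_Some (A:=A)) => E; by rewrite E ltnn in nm.
  + exists 0%N, a => n b _ ab; apply/(AC_Some (A:=A)) => -[_]; by rewrite ltNge ab.
  + exists 0%N, a => n b _ ab; apply/(AC_Some (A:=A)) => -[_]; by rewrite ltNge ab.
Qed.

Lemma notLsel : ~ L_selective (Xsp A).
Proof.
move=> HL; have [k0 _] := K_inh hT.
pose phi (y : option nat) : set (Xsp A) := match y with None => [set None] | Some n => [set x | exists b, x = Some (n, b)] end.
have H1 : forall y, phi y !=set0 /\ closed (phi y).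
  move=> [n|]; split.
  + by exists (Some (n, k0)), k0.
  + move=> x clx; case: x clx => [[m b]|] clx.
      case: (eqVneq m n) => [->|mn]; first by exists b.
      have := clx _ (sub_nbhs (subSome (m, b)) erefl).
      by move=> [z [[c ->] E]]; case: E => E _; rewrite E eqxx in mn.
    have := clx _ (sub_nbhs (subrow n) (rowC_None (A:=A) (n:=n))).
    by move=> [_ [[c ->] /(rowC_Some (A:=A))]].
  + by exists None.
  + move=> x clx; case: x clx => [[m b]|] clx //.
    by have := clx _ (sub_nbhs (subSome (m, b)) erefl) => -[_ [->]].
have H2 : lower_semicontinuous phi.
  move=> W oW Hy.
  have WN : W None by case: Hy => x [] /= -> .
  have [N [beta H]] := nbhs_None_corner k0 (open_nbhs_nbhs (conj oW WN)).
  exists N => n nN; exists (Some (n, beta)); split; first by exists beta.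
  exact: H.
have [s [cs Hs]] := HL phi H1 H2.
have sN : s None = None by have := Hs None.
have hg : forall n, exists b, s (Some n) = Some (n, b) by move=> n; have [b ->] := Hs (Some n); exists b.
have [g Hg] := choice hg.
have [delta Hd] := cof hT g.
pose W := ~` [set (Some (k, c) : Xsp A) | k in A delta & c in [set c | (c < delta)%O]].
have oW : open W by apply: openX => WN; apply: sub_nbhs => //; exact: subA.
have [N HN] : exists N, forall n, (N <= n)%N -> W (s (Some n)).
  by apply: (cs W oW); rewrite /= sN; exact: (AC_None (A:=A)).
case: hT => iA _; apply: (iA delta); apply: (@bound_fin _ N) => n An.
rewrite ltnNge; apply/negP => Nn.
have := HN n Nn; rewrite /= Hg => /(AC_Some (A:=A)); apply; split => //.
Qed.

End NotL.

Section CFCsec.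
Context d (K : orderType d) (A : K -> set nat).
Hypothesis hT : tower A.
Hypothesis hW : well_ordered K.

Lemma rows_nbhs N : nbhs (None : Xsp A) [set x | forall n g, x = Some (n, g) -> (N <= n)%N].
Proof.
elim: N => [|N IH].
  by apply: nbS (nbT _) => x _ n g _.
apply: nbS (nbI IH (sub_nbhs (subrow N) (rowC_None (A:=A) (n:=N)))) => x [H1 H2] n g E; have := H1 n g E; rewrite leq_eqVlt => /orP [/eqP NE|//].
by subst x; move: H2 => /(rowC_Some (A:=A)); rewrite NE.
Qed.

Lemma CFC_X : CFC (Xsp A).
Proof.
move=> Y cY y Yy; case: y Yy => [p|] Yy.
  exists (fun _ => [set Some p]); split.
    by move=> _; split => //; apply: openX.
  by move=> V oV Vp; exists 0%N => x [-> _].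
have [k0 _] := K_inh hT.
have [f finj] : exists f : Xsp A -> nat, {in Y &, injective f} by apply/countable_injP.
have hc : forall m, exists g : K, (exists n, Y (Some (n, g)) /\ f (Some (n, g)) = m) \/
   ~ (exists n g', Y (Some (n, g')) /\ f (Some (n, g')) = m).
  move=> m; case: (pselect (exists n g', Y (Some (n, g')) /\ f (Some (n, g')) = m)).
    by move=> [n [g' H]]; exists g'; left; exists n.
  by move=> H; exists k0; right.
have [c Hc] := choice hc.
have csurj : forall n g, Y (Some (n, g)) -> exists m, c m = g.
  move=> n g Yg; exists (f (Some (n, g))).
  case: (Hc (f (Some (n, g)))) => [[n' [Y' E]]|H]; last by case: H; exists n, g.
  have := finj _ _ (mem_set Y') (mem_set Yg) E; by case=> _ ->.
pose spec (j : option nat) (al : K) := match j with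
  | Some m => forall i, (c i < al)%O = (c i < c m)%O
  | None => forall i, (c i < al)%O end.
pose least j al := spec j al /\ forall be, spec j be -> (al <= be)%O.
pose Wset (i : option nat * nat) : set (Xsp A) := [set x | forall n g, x = Some (n, g) ->
   (i.2 <= n)%N /\ forall al, least i.1 al -> ~ (A al n /\ (g < al)%O)].
pose Wl (l : seq (option nat * nat)) : set (Xsp A) := [set x | forall i, i \in l -> Wset i x].
pose U k := match (choice.unpickle k : option (seq (option nat * nat))) with Some l => Wl l | None => setT end.
have nbW : forall i, nbhs (None : Xsp A) (Wset i).
  move=> [j N]; case: (pselect (exists al, least j al)) => [[al Hal]|nal].
    apply: nbS (nbI (rows_nbhs N) (sub_nbhs (subA al) (AC_None (A:=A) (B:=A al) (a:=al)))) => x [H1 H2] n g E; split; first exact: H1 E.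
    move=> al' Hal'.
    have eal : al' = al by apply/le_anti; rewrite (Hal.2 _ Hal'.1) (Hal'.2 _ Hal.1).
    by subst x al'; move: H2 => /(AC_Some (A:=A)).
  apply: nbS (rows_nbhs N) => x H1 n g E; split; first exact: H1 E.
  by move=> al Hal; case: nal; exists al.
have nbWl : forall l, nbhs (None : Xsp A) (Wl l).
  elim => [|i l IH]; first by apply: nbS (nbT _) => x _ i.
  apply: nbS (nbI (nbW i) IH) => x [H1 H2] i'; rewrite inE => /orP [/eqP ->//|]; exact: H2.
have lemA : forall al, exists i, forall n g, Wset i (Some (n, g)) -> Y (Some (n, g)) -> ~ (A al n /\ (g < al)%O).
  move=> al.
  have [j [al0 [Hl [al0al Hc0]]]] : exists j al0, [/\ least j al0, (al0 <= al)%O &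
      forall i, (c i < al)%O -> (c i < al0)%O].
    have Hmin : forall j, spec j al -> exists al0, least j al0.
      move=> j sp; have [al0 [s0 m0]] := hW (S := spec j) (ex_intro _ al sp).
      by exists al0; split.
    case: (pselect (forall m, (c m < al)%O)) => [Hall|].
      have [al0 Hl] := Hmin None Hall.
      exists None, al0; split => //; first exact: Hl.2.
      by move=> i _; apply: Hl.1.
    move=> /existsNP [m0 m0al].
    have [g0 [[m1 [E1 alm1]] m1min]] := hW (S := [set g | exists m, c m = g /\ (al <= g)%O])
      (ex_intro _ (c m0) (ex_intro _ m0 (conj erefl (ltNle_K m0al)))).
    subst g0.
    have sp : spec (Some m1) al.
      move=> i /=; apply/idP/idP => H.
        exact: lt_le_trans H alm1.
      apply: contrapT => /ltNle_K H'.
      by have := m1min (c i) (ex_intro _ i (conj erefl H')); rewrite leNgt H.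
    have [al0 Hl] := Hmin (Some m1) sp.
    exists (Some m1), al0; split => //; first exact: Hl.2.
    by move=> i cial; have := Hl.1 i; rewrite /= -(sp i) cial.
  have [N HN] := fin_bound (smf_le hT al0al).
  exists (j, N) => n g W1 Yg [Aal gal].
  have [Nn W2] := W1 n g erefl.
  apply: (W2 al0 Hl); split.
    apply: contrapT => nA; have := HN n (conj Aal nA); by rewrite ltnNge Nn.
  have [m cm] := csurj n g Yg; rewrite -cm; apply: Hc0; by rewrite cm.
exists U; split.
  move=> k; rewrite /U; case: (choice.unpickle k) => [l|]; split => //.
    by apply: openX => _; apply: nbWl.
  exact: openT.
move=> V oV VN.
have : exists l, Wl l `&` Y `<=` V.
  move: (open_nbhs_nbhs (conj oV VN)).
  apply: (@nbhs_ind _ _ _ None (fun V => exists l, Wl l `&` Y `<=` V)).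
  - by exists [::].
  - move=> V1 V2 [l1 H1] [l2 H2]; exists (l1 ++ l2) => x [Wx Yx]; split.
      by apply: H1; split => // i il; apply: Wx; rewrite mem_cat il.
    by apply: H2; split => // i il; apply: Wx; rewrite mem_cat il orbT.
  - move=> V1 V2 V12 [l H]; exists l; apply: subset_trans H V12.
  - move=> S + SN; case=> [[p E]|[[m E]|[[al E]|[al [B [ucal [psB E]]]]]]]; subst S.
    + by [].
    + exists [:: (None, m.+1)] => -[[n g]|] [Wx Yx]; last exact: rowC_None.
      apply/(rowC_Some (A:=A)) => nm; have [+ _] := Wx _ (mem_head _ _) n g erefl.
      by rewrite nm ltnn.
    + have [i Hi] := lemA al; exists [:: i] => -[[n g]|] [Wx Yx]; last exact: AC_None.
      by apply/(AC_Some (A:=A)); apply: Hi => //; apply: Wx; rewrite inE.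
    + have [[b0 b0al] Hcof] := ucal.
      have hf : forall i, ((if (c i < al)%O then c i else b0) < al)%O by move=> i; case: ifP.
      have [b [bal Hb]] := Hcof _ hf.
      have [N' HN'] := fin_bound (psB (A b) (ex_intro2 _ _ b bal erefl)).
      have [i Hi] := lemA b.
      exists [:: (None, N'); i] => -[[n g]|] [Wx Yx]; last exact: AC_None.
      apply/(AC_Some (A:=A)) => -[Bn gal].
      have [N'n _] := Wx _ (mem_head _ _) n g erefl.
      apply: (Hi n g) => //; first by apply: Wx; rewrite !inE eqxx orbT.
      split.
        apply: contrapT => nA; have := HN' n (conj Bn nA); by rewrite ltnNge N'n.
      have [m cm] := csurj n g Yx; have := Hb m; by rewrite cm gal.
move=> [l Hl]; exists (choice.pickle l); by rewrite /U choice.pickleK.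
Qed.

End CFCsec.

Lemma prefix_max d (K : orderType d) (f : nat -> K) : exists g : nat -> K,
  [/\ forall k, (f k <= g k)%O, forall k k', (k <= k')%N -> (g k <= g k')%O &
      forall th, (forall n, (f n < th)%O) -> forall k, (g k < th)%O].
Proof.
pose g := fix g k := match k with 0%N => f 0%N | k'.+1 => Order.max (g k') (f k'.+1) end.
exists g; split.
- by case => [|k] //=; rewrite le_max lexx orbT.
- move=> k k'; elim: k' => [|k' IH]; first by rewrite leqn0 => /eqP ->.
  rewrite leq_eqVlt => /orP [/eqP ->//|]; rewrite ltnS => /IH kk'.
  by apply: le_trans kk' _ => /=; rewrite le_max lexx.
- move=> th H; elim => [|k IH] //=; by rewrite gt_max IH H.
Qed.

Section Frech.
Context d (K : orderType d) (A : K -> set nat).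
Hypothesis hT : tower A.
Hypothesis hW : well_ordered K.

Definition below (Y : set (Xsp A)) (lt : K -> Prop) : set (Xsp A) :=
  [set x | Y x /\ exists n g, x = Some (n, g) /\ lt g].

Lemma conv (n : nat -> nat) (g : nat -> K) :
  (forall k, (k <= n k)%N) ->
  (forall al, exists N, forall k, (N <= k)%N -> A al (n k) -> (al <= g k)%O) ->
  (forall al B, uncountable_cof al -> pseudo_intersection [set A b | b in [set b | (b < al)%O]] B ->
     exists N, forall k, (N <= k)%N -> B (n k) -> (al <= g k)%O) ->
  (fun k => (Some (n k, g k) : Xsp A)) @ \oo --> (None : Xsp A).
Proof.
move=> kn HA HB; apply: cvgX => S + SN.
case=> [[p E]|[[m E]|[[al E]|[al [B [ucal [psB E]]]]]]]; subst S.
- by [].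
- exists m.+1 => k mk; apply/(rowC_Some (A:=A)) => E.
  by have := leq_trans mk (kn k); rewrite E ltnn.
- have [N HN] := HA al; exists N => k Nk; apply/(AC_Some (A:=A)) => -[Ak gk].
  by have := HN k Nk Ak; rewrite leNgt gk.
- have [N HN] := HB al B ucal psB; exists N => k Nk; apply/(AC_Some (A:=A)) => -[Bk gk].
  by have := HN k Nk Bk; rewrite leNgt gk.
Qed.

Lemma avoid (n : nat -> nat) (F : set nat) : (forall k, (k <= n k)%N) -> finite_set F ->
  exists N, forall k, (N <= k)%N -> ~ F (n k).
Proof.
move=> kn /fin_bound [M HM]; exists M => k Mk Fk.
by have := HM _ Fk; rewrite ltnNge (leq_trans Mk (kn k)).
Qed.

Lemma closure_nbhs (S : set (Xsp A)) V : closure S None -> nbhs (None : Xsp A) V ->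
  exists x, S x /\ V x.
Proof. by move=> cl nV; have [x [Sx Vx]] := cl V nV; exists x. Qed.

Lemma not_closure (S : set (Xsp A)) : ~ closure S None ->
  exists V, nbhs (None : Xsp A) V /\ forall x, S x -> V x -> False.
Proof.
move=> ncl; apply: contrapT => H; apply: ncl => B nB; apply: contrapT => H2.
apply: H; exists B; split => // x Sx Bx; apply: H2; by exists x.
Qed.

Lemma caseC (Y : set (Xsp A)) (lt : K -> Prop) :
  (forall f : nat -> K, (forall n, lt (f n)) -> exists b, lt b /\ forall n, (f n < b)%O) ->
  (forall b, lt b -> ~ closure (below Y (fun g => (g < b)%O)) None) ->
  closure (below Y lt) None ->
  (forall E : set nat, (forall be, lt be -> subset_mod_fin E (A be)) ->
     exists V, nbhs (None : Xsp A) V /\ forall n g, V (Some (n, g)) -> lt g -> ~ E n) ->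
  exists u : nat -> Xsp A, (forall k, Y (u k)) /\ u @ \oo --> (None : Xsp A).
Proof.
move=> Hcof Hmin Hclo Hpi.
have [_ [[_ [n0 [b0 [_ ltb0]]]] _]] := closure_nbhs Hclo (nbT None).
pose E := [set n | forall b, lt b -> exists g, Y (Some (n, g)) /\ lt g /\ (b <= g)%O].
have hb : forall n, exists b, lt b /\ (~ E n -> forall g, Y (Some (n, g)) -> lt g -> (g < b)%O).
  move=> n; case: (pselect (E n)) => En; first by exists b0.
  move/existsNP: En => [b /not_implyP [ltb H]]; exists b; split => // _ g Yg ltg.
  apply: contrapT => /ltNle_K bg; apply: H; by exists g.
have [bf Hbf] := choice hb.
have [delta [ltd Hd]] := Hcof bf (fun n => (Hbf n).1).
have [V [nV HV]] := not_closure (Hmin _ ltd).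
have [be [ltbe nsm]] : exists be, lt be /\ ~ subset_mod_fin E (A be).
  apply: contrapT => H.
  have H' : forall be, lt be -> subset_mod_fin E (A be).
    move=> be ltbe; apply: contrapT => nsm; apply: H; by exists be.
  have [V' [nV' HV']] := Hpi E H'.
  have [x [[Yx [n [g [xE ltg]]]] [Vx V'x]]] := closure_nbhs Hclo (nbI nV nV').
  subst x; apply: (HV (Some (n, g))) => //; split => //; exists n, g; split => //.
  apply: lt_trans (Hd n); apply: (Hbf n).2 => //; exact: HV' V'x ltg.
have hp : forall k, exists p : nat * K, [/\ (k <= p.1)%N, ~ A be p.1, Y (Some p), lt p.2 & (be <= p.2)%O].
  move=> k; have [n [[En nA] kn]] := infinite_unb nsm k.
  have [g [Yg [ltg beg]]] := En be ltbe.
  by exists (n, g).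
have [p Hp] := choice hp.
have kp : forall k, (k <= (p k).1)%N by move=> k; case: (Hp k).
exists (fun k => Some ((p k).1, (p k).2)); split.
  by move=> k; have [_ _ + _ _] := Hp k; case: (p k).
apply: conv.
- exact: kp.
- move=> al; case: (boolP (al <= be)%O) => albe.
    exists 0%N => k _ _; have [_ _ _ _ h] := Hp k; exact: le_trans albe h.
  have beal : (be <= al)%O by apply: ltW; rewrite ltNge.
  have [N HN] := avoid kp (smf_le hT beal).
  exists N => k Nk Ak; case: (HN k Nk); split => //; by have [] := Hp k.
- move=> al B ucal psB; case: (boolP (al <= be)%O) => albe.
    exists 0%N => k _ _; have [_ _ _ _ h] := Hp k; exact: le_trans albe h.
  have beal : (be < al)%O by rewrite ltNge.
  have [N HN] := avoid kp (psB (A be) (ex_intro2 _ _ be beal erefl)).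
  exists N => k Nk Bk; case: (HN k Nk); split => //; by have [] := Hp k.
Qed.


Lemma caseB (Y : set (Xsp A)) (th : K) (f : nat -> K) :
  (forall n, (f n < th)%O) -> (forall b, (b < th)%O -> exists n, (b <= f n)%O) ->
  (forall b, (b < th)%O -> ~ closure (below Y (fun g => (g < b)%O)) None) ->
  closure (below Y (fun g => (g < th)%O)) None ->
  exists u : nat -> Xsp A, (forall k, Y (u k)) /\ u @ \oo --> (None : Xsp A).
Proof.
move=> fth fcof Hmin Hclo.
have [g [fg gmono gth]] := prefix_max f.
have gth' := gth th fth.
have hV : forall k, exists V, nbhs (None : Xsp A) V /\
    forall x, below Y (fun g0 => (g0 < g k)%O) x -> V x -> False.
  move=> k; exact: not_closure (Hmin _ (gth' k)).
have [V HV] := choice hV.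
have hp : forall k, exists p : nat * K, [/\ (k <= p.1)%N, ~ A th p.1, Y (Some p), (p.2 < th)%O & (g k <= p.2)%O].
  move=> k.
  have nb := nbI (nbI (HV k).1 (rows_nbhs A k)) (sub_nbhs (subA th) (AC_None (A:=A) (B:=A th) (a:=th))).
  have [x [[Yx [n [g0 [xE ltg]]]] [[Vx Rx] Ax]]] := closure_nbhs Hclo nb.
  subst x; exists (n, g0); split => //=.
  - exact: Rx n g0 erefl.
  - by move=> An; move/(AC_Some (A:=A)): Ax; apply.
  - apply: ltNle_K => lt0; apply: ((HV k).2 (Some (n, g0))) => //; split => //.
    by exists n, g0.
have [p Hp] := choice hp.
have kp : forall k, (k <= (p k).1)%N by move=> k; case: (Hp k).
have early : forall al, (al < th)%O -> exists N, forall k, (N <= k)%N -> (al <= (p k).2)%O.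
  move=> al alth; have [m alm] := fcof al alth; exists m => k mk.
  have [_ _ _ _ h] := Hp k.
  exact: le_trans alm (le_trans (fg m) (le_trans (gmono _ _ mk) h)).
exists (fun k => Some ((p k).1, (p k).2)); split.
  by move=> k; have [_ _ + _ _] := Hp k; case: (p k).
apply: conv.
- exact: kp.
- move=> al; case: (boolP (al < th)%O) => alth.
    by have [N HN] := early al alth; exists N => k Nk _; apply: HN.
  have thal : (th <= al)%O by rewrite leNgt.
  have [N HN] := avoid kp (smf_le hT thal).
  exists N => k Nk Ak; case: (HN k Nk); split => //; by have [] := Hp k.
- move=> al B ucal psB; case: (boolP (al < th)%O) => alth.
    by have [N HN] := early al alth; exists N => k Nk _; apply: HN.
  case: (eqVneq al th) => [E|alth'].
    subst al; case: ucal => _ /(_ f fth) [b [bth Hb]].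
    have [n bn] := fcof b bth; by have := Hb n; rewrite ltNge bn.
  have thal : (th < al)%O by rewrite lt_neqAle eq_sym alth' leNgt alth.
  have [N HN] := avoid kp (psB (A th) (ex_intro2 _ _ th thal erefl)).
  exists N => k Nk Bk; case: (HN k Nk); split => //; by have [] := Hp k.
Qed.

Lemma Frechet_X : Frechet (Xsp A).
Proof.
move=> Y x clx.
have cst : forall y : Xsp A, Y y -> exists u : nat -> Xsp A, (forall n, Y (u n)) /\ u @ \oo --> y.
  by move=> y Yy; exists (fun _ => y); split => //; apply: cvg_cst.
case: x clx => [p|] clx.
  apply: cst; have [z [Yz E]] := clx _ (sub_nbhs (subSome (A:=A) p) erefl); by rewrite -E.
case: (pselect (Y None)) => YN; first exact: cst.
case: (pselect (exists al, closure (below Y (fun g => (g < al)%O)) None)) => [Hex|Hnex].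
  have [th [Pth thmin]] := hW Hex.
  have Hmin : forall b, (b < th)%O -> ~ closure (below Y (fun g => (g < b)%O)) None.
    by move=> b bth Pb; have := thmin b Pb; rewrite leNgt bth.
  case: (pselect (uncountable_cof th)) => uc.
    apply: (@caseC Y (fun g => (g < th)%O)) => //.
    - by move=> f fth; case: uc => _; apply.
    - move=> E HE; exists (~` [set (Some (k, c) : Xsp A) | k in E & c in [set c | (c < th)%O]]).
      split.
        apply: sub_nbhs; last exact: AC_None.
        right; right; right; exists th, E; split => //; split => //.
        by move=> _ [b bth <-]; apply: HE.
      by move=> n g /(AC_Some (A:=A)) H gth En; apply: H.
  move/not_andP: uc => [nb|].
    have [_ [[_ [n [g [_ gth]]]] _]] := closure_nbhs Pth (nbT None).
    by case: nb; exists g.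
  move/existsNP => [f /not_implyP [fth nf]].
  apply: (@caseB Y th f) => // b bth.
  apply: contrapT => H; apply: nf; exists b; split => // n.
  apply: contrapT => /ltNle_K bf; apply: H; by exists n.
apply: (@caseC Y (fun _ => True)) => //.
- by move=> f _; have [b Hb] := cof hT f; exists b.
- by move=> b _ Pb; apply: Hnex; exists b.
- move=> B nB; have [y [Yy By]] := clx B nB; exists y; split => //; split => //.
  by case: y Yy By => [[n g]|] Yy By //; exists n, g.
- move=> E HE; case: (pselect (finite_set E)) => fE.
    have [M HM] := fin_bound fE; exists [set x | forall n g, x = Some (n, g) -> (M <= n)%N].
    split; first exact: rows_nbhs.
    by move=> n g H _ En; have := HM n En; rewrite ltnNge (H n g erefl).
  case: hT => _ [_]; case; exists E; split => //.
  by move=> _ [b _ <-]; apply: HE.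
Qed.

End Frech.

Theorem mainTheorem9 (d : Order.disp_t) (K : orderType d) (A : K -> set nat) :
  is_ordinal_p K -> tower A ->
  CFC (Xsp A) /\ Frechet (Xsp A) /\ ~ L_selective (Xsp A).
Proof.
move=> [hW _] hT; split; first exact: (CFC_X hT hW).
split; first exact: (Frechet_X hT hW).
exact: (notLsel hT).
Qed.
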